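(* Let $g\in\mathrm{SL}_d(\mathbb{R})$ and $\mathcal{P}=\mathrm{span}_\mathbb{R}\{ge_1,\dots,ge_{d-1}\}$. Then: (1) Under the identification $X_{d-1,d}=\mathrm{SL}_d(\mathbb{R})/Q$, the subset $X_\mathcal{P}$ equals $gP/Q=\{gpQ:p\in P\}$. (2) The map $\varphi_g:\mathrm{PGL}_{d-1}(\mathbb{R})/\mathrm{PGL}_{d-1}(\mathbb{Z})\to X_\mathcal{P}$, $\mathbb{R}^\times m\,\mathrm{PGL}_{d-1}(\mathbb{Z})\mapsto g\begin{pmatrix}m&0\\0&1/\det m\end{pmatrix}Q$ ($m\in\mathrm{GL}_{d-1}(\mathbb{R})$), is a homeomorphism. (3) If $g'\in\mathrm{SL}_d(\mathbb{R})$ satisfies $gP=g'P$, then $(\varphi_g)_*\mu_{X_{d-1}}=(\varphi_{g'})_*\mu_{X_{d-1}}$, where $\mu_{X_{d-1}}$ is the $\mathrm{PGL}_{d-1}(\mathbb{R})$-invariant probability measure on $\mathrm{PGL}_{d-1}(\mathbb{R})/\mathrm{PGL}_{d-1}(\mathbb{Z})$.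
   Context: $X_{d-1,d}$ is the space of homothety classes $[\Lambda]=\{\alpha\Lambda:\alpha\in\mathbb{R}^\times\}$ of rank-$(d-1)$ discrete subgroups $\Lambda$ of $\mathbb{R}^d$, identified with $\mathrm{SL}_d(\mathbb{R})/Q$ via $gQ\mapsto[g\,\mathrm{span}_\mathbb{Z}\{e_1,\dots,e_{d-1}\}]$, where $Q=\{\begin{pmatrix}\lambda\gamma&*\\0&1/\det(\lambda\gamma)\end{pmatrix}:\lambda\in\mathbb{R}^\times,\gamma\in\mathrm{GL}_{d-1}(\mathbb{Z})\}$. $P=\{\begin{pmatrix}m&*\\0&1/\det m\end{pmatrix}:m\in\mathrm{GL}_{d-1}(\mathbb{R})\}$. For a hyperplane $\mathcal{P}$, $X_\mathcal{P}=\{[\Lambda]\in X_{d-1,d}:\Lambda\subseteq\mathcal{P}\}$. *)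

(* Defs.v *)
From HB Require Import structures.
From mathcomp Require Import all_boot all_order all_algebra.
From mathcomp Require Import all_classical all_reals all_analysis.
Set Implicit Arguments.
Unset Strict Implicit.
Unset Printing Implicit Defensive.
Import Order.TTheory GRing.Theory Num.Theory.
Import numFieldNormedType.Exports.
Local Open Scope classical_set_scope.
Local Open Scope ring_scope.
Local Open Scope quotient_scope.

(* For a subgroup H, cls g = gH and coset_space cls is G/H.            *)
Section CosetSpace.
Variables (T : Type) (cls : T -> set T).

Definition coset_space : Type := {A : set T | exists g, A = cls g}.

Definition coset_pi (g : T) : coset_space :=
  exist (fun A => exists g, A = cls g) (cls g) (ex_intro _ g erefl).

Definition coset_repr (x : coset_space) : T := projT1 (cid (proj2_sig x)).

Lemma coset_reprK : cancel coset_repr coset_pi.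
Proof.
case=> A hA; rewrite /coset_repr /coset_pi /=.
case: cid => g /= e; subst A; congr exist; exact: Prop_irrelevance.
Qed.

HB.instance Definition _ := isQuotient.Build T coset_space coset_reprK.
End CosetSpace.

Lemma det_castmx_sq (R : comPzRingType) m k (e : m = k) (A : 'M[R]_m) :
  \det (castmx (e, e) A) = \det A.
Proof. by case: k / e; rewrite castmx_id. Qed.

Section Spaces.
Variables (R : realType) (n : nat).
(* Throughout d = n.+2, so d - 1 = n.+1 >= 1. *)

Definition intmx (gam : 'M[int]_(n.+1)) : 'M[R]_(n.+1) :=
  map_mx (fun z : int => z%:~R) gam.

Definition blk (A : 'M[R]_(n.+1)) (b : 'cV[R]_(n.+1)) (c : R) : 'M[R]_(n.+2) :=
  castmx (addn1 n.+1, addn1 n.+1) (block_mx A b 0 c%:M).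

Definition SLset : set 'M[R]_(n.+2) := [set g | \det g = 1].
Definition SLt : Type := set_type SLset.
HB.instance Definition _ := Topological.copy SLt (set_type SLset).

Definition Qset : set 'M[R]_(n.+2) :=
  [set q | exists (lam : R) (gam : 'M[int]_(n.+1)) (b : 'cV[R]_(n.+1)),
     [/\ lam != 0, gam \in unitmx &
      q = blk (lam *: intmx gam) b (\det (lam *: intmx gam))^-1]].

Definition Pset : set 'M[R]_(n.+2) :=
  [set p | exists (m : 'M[R]_(n.+1)) (b : 'cV[R]_(n.+1)),
     m \in unitmx /\ p = blk m b (\det m)^-1].

Definition clsQ (h : SLt) : set SLt :=
  [set h' | exists q, Qset q /\ val h' = val h *m q].

Definition Xdd : Type := quotient_topology (coset_space clsQ).

Definition GLset : set 'M[R]_(n.+1) := [set m | m \in unitmx].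
Definition GLt : Type := set_type GLset.
HB.instance Definition _ := Topological.copy GLt (set_type GLset).

Definition clsPZ (m : GLt) : set GLt :=
  [set m' | exists (lam : R) (gam : 'M[int]_(n.+1)),
     [/\ lam != 0, gam \in unitmx & val m' = lam *: (val m *m intmx gam)]].

(* X_{d-1} = PGL_{d-1}(R)/PGL_{d-1}(Z), realised as GL_{d-1}(R)/(R^x GL_{d-1}(Z))
   with the quotient topology *)
Definition Xd1 : Type := quotient_topology (coset_space clsPZ).

Lemma GL1P : (1%:M : 'M[R]_(n.+1)) \in GLset.
Proof. by rewrite inE /GLset /= unitmx1. Qed.
Definition GL1 : GLt := exist _ 1%:M GL1P.

Lemma SL1P : (1%:M : 'M[R]_(n.+2)) \in SLset.
Proof. by rewrite inE /SLset /= det1. Qed.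
Definition SL1 : SLt := exist _ 1%:M SL1P.

HB.instance Definition _ :=
  Topological.copy Xd1 (quotient_topology (coset_space clsPZ)).
HB.instance Definition _ :=
  Topological.copy Xdd (quotient_topology (coset_space clsQ)).

HB.instance Definition _ := isPointed.Build Xd1 (\pi_Xd1 GL1).
HB.instance Definition _ := isPointed.Build Xdd (\pi_Xdd SL1).

Definition BXd1 := g_sigma_algebraType (@open Xd1).
Definition BXdd := g_sigma_algebraType (@open Xdd).
HB.instance Definition _ := Measurable.copy BXd1 (g_sigma_algebraType (@open Xd1)).
HB.instance Definition _ := Measurable.copy BXdd (g_sigma_algebraType (@open Xdd)).

Lemma GL_mulP (a b : GLt) : val a *m val b \in GLset.
Proof.
case: a b => [a ha] [b hb] /=; move: ha hb; rewrite !inE /GLset /= => ha hb.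
by rewrite unitmx_mul ha hb.
Qed.
Definition mulGL (a b : GLt) : GLt := exist _ (val a *m val b) (GL_mulP a b).

Definition actGL (m0 : GLt) (x : Xd1) : Xd1 := \pi_Xd1 (mulGL m0 (repr x)).

Definition PGL_invariant (mu : probability BXd1 R) : Prop :=
  forall (m0 : GLt) (B : set BXd1), measurable B ->
    mu (actGL m0 @^-1` B) = mu B.

Definition embmx (g : 'M[R]_(n.+2)) (m : 'M[R]_(n.+1)) : 'M[R]_(n.+2) :=
  g *m blk m 0 (\det m)^-1.

Lemma embP (g : SLt) (m : GLt) : embmx (val g) (val m) \in SLset.
Proof.
case: g m => [g hg] [m hm] /=; move: hg hm; rewrite !inE /SLset /GLset /=.
move=> hg hm; rewrite /embmx det_mulmx hg mul1r /blk det_castmx_sq det_ublock det_scalar1.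
by rewrite mulfV // -unitfE -unitmxE.
Qed.
Definition emb (g : SLt) (m : GLt) : SLt := exist _ (embmx (val g) (val m)) (embP g m).

Definition phi (g : SLt) (x : Xd1) : Xdd := \pi_Xdd (emb g (repr x)).

Definition plane (g : 'M[R]_(n.+2)) : set 'cV[R]_(n.+2) :=
  [set v | exists c : 'I_(n.+1) -> R,
     v = \sum_(i < n.+1) c i *: col (widen_ord (leqnSn n.+1) i) g].

Definition lat (h : 'M[R]_(n.+2)) : set 'cV[R]_(n.+2) :=
  [set v | exists c : 'I_(n.+1) -> int,
     v = \sum_(i < n.+1) (c i)%:~R *: col (widen_ord (leqnSn n.+1) i) h].

(* X_Plane = { [Lambda] : Lambda subset Plane }, via hQ |-> [h span_Z{e_i}] *)
Definition XP (Pl : set 'cV[R]_(n.+2)) : set Xdd :=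
  [set x | lat (val (repr x)) `<=` Pl].

Definition gPQ (g : SLt) : set Xdd :=
  [set \pi_Xdd h | h in [set h : SLt | exists p, Pset p /\ val h = val g *m p]].

Definition gP (g : SLt) : set 'M[R]_(n.+2) := [set val g *m p | p in Pset].

End Spaces.

(* Main.v *)
Require Import Defs.
From HB Require Import structures.
From mathcomp Require Import all_boot all_order all_algebra.
From mathcomp Require Import all_classical all_reals all_analysis.
Import Order.TTheory GRing.Theory Num.Theory.
Import numFieldNormedType.Exports.
Local Open Scope classical_set_scope.
Local Open Scope ring_scope.
Local Open Scope quotient_scope.
Set Implicit Arguments. Unset Strict Implicit. Unset Printing Implicit Defensive.

Section Cont.
Variables (R : realType) (T : topologicalType).

Lemma mx_cont a b (f : T -> 'M[R]_(a, b)) x :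
  (forall i j, {for x, continuous (fun y => f y i j)}) -> {for x, continuous f}.
Proof.
move=> hf A [P hP sPA]; rewrite nbhs_simpl /=.
apply: (filterS (P := fun y => forall ij : 'I_a * 'I_b, P ij.1 ij.2 (f y ij.1 ij.2))).
  by move=> y hy; apply: sPA => i j; exact: (hy (i, j)).
apply: filter_forall => -[i j] /=; exact: hf (hP i j).
Qed.

Lemma cont_ext (U : topologicalType) (f g : T -> U) x : (forall y, g y = f y) ->
  {for x, continuous f} -> {for x, continuous g}.
Proof. by move=> e; have -> : g = f by apply: funext. Qed.

Lemma cont_sum (I : Type) (r : seq I) (P : pred I) (F : I -> T -> R) x :
  (forall i, {for x, continuous (F i)}) ->
  {for x, continuous (fun y => \sum_(i <- r | P i) F i y)}.
Proof.
move=> hF; elim: r => [|i r IH].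
  by apply: (cont_ext (f := fun=> 0)) => [y|]; rewrite ?big_nil //; exact: cst_continuous.
case: (boolP (P i)) => Pi.
  apply: (cont_ext (f := fun y => F i y + \sum_(j <- r | P j) F j y)) => [y|]; first by rewrite big_cons Pi.
  exact: continuousD.
apply: (cont_ext (f := fun y => \sum_(j <- r | P j) F j y)) => [y|]; first by rewrite big_cons (negbTE Pi).
exact: IH.
Qed.

Lemma cont_prod (I : Type) (r : seq I) (P : pred I) (F : I -> T -> R) x :
  (forall i, {for x, continuous (F i)}) ->
  {for x, continuous (fun y => \prod_(i <- r | P i) F i y)}.
Proof.
move=> hF; elim: r => [|i r IH].
  by apply: (cont_ext (f := fun=> (1 : R))) => [y|]; rewrite ?big_nil //; exact: cst_continuous.
case: (boolP (P i)) => Pi.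
  apply: (cont_ext (f := fun y => F i y * \prod_(j <- r | P j) F j y)) => [y|]; first by rewrite big_cons Pi.
  exact: continuousM.
apply: (cont_ext (f := fun y => \prod_(j <- r | P j) F j y)) => [y|]; first by rewrite big_cons (negbTE Pi).
exact: IH.
Qed.

Lemma cont_mul (F G : T -> R) x : {for x, continuous F} -> {for x, continuous G} ->
  {for x, continuous (fun y => F y * G y)}.
Proof. exact: continuousM. Qed.

Lemma entry_mull a b c (f : T -> 'M[R]_(a, b)) (A : 'M[R]_(c, a)) x :
  (forall i j, {for x, continuous (fun y => f y i j)}) ->
  forall i j, {for x, continuous (fun y => (A *m f y) i j)}.
Proof.
move=> hf i j; apply: (cont_ext (f := fun y => \sum_k A i k * f y k j)) => [y|]; first by rewrite mxE.
apply: cont_sum => k; apply: cont_mul; [exact: cst_continuous| exact: hf].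
Qed.

Lemma entry_mulr a b c (f : T -> 'M[R]_(a, b)) (A : 'M[R]_(b, c)) x :
  (forall i j, {for x, continuous (fun y => f y i j)}) ->
  forall i j, {for x, continuous (fun y => (f y *m A) i j)}.
Proof.
move=> hf i j; apply: (cont_ext (f := fun y => \sum_k f y i k * A k j)) => [y|]; first by rewrite mxE.
apply: cont_sum => k; apply: cont_mul; [exact: hf|exact: cst_continuous].
Qed.

Lemma entry_det m (f : T -> 'M[R]_m) x :
  (forall i j, {for x, continuous (fun y => f y i j)}) ->
  {for x, continuous (fun y => \det (f y))}.
Proof.
move=> hf; rewrite /determinant.
apply: cont_sum => s; apply: cont_mul; first exact: cst_continuous.
by apply: cont_prod => i; exact: hf.
Qed.

End Cont.

Lemma coord_cont (R : realType) a b (M : 'M[R]_(a, b)) i j :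
  {for M, continuous (fun N : 'M[R]_(a, b) => N i j)}.
Proof. exact: coord_continuous. Qed.

Lemma castmx_mul_sq (R : pzRingType) m k (e : m = k) (A B : 'M[R]_m) :
  castmx (e, e) A *m castmx (e, e) B = castmx (e, e) (A *m B).
Proof. by case: k / e; rewrite !castmx_id. Qed.

Section Alg.
Variables (R : realType) (n : nat).
Local Notation blk := (@blk R n).

Lemma blkM (A A' : 'M[R]_(n.+1)) b b' c c' :
  blk A b c *m blk A' b' c' = blk (A *m A') (A *m b' + c' *: b) (c * c').
Proof.
rewrite /blk castmx_mul_sq mulmx_block !mulmx0 !mul0mx !addr0 add0r.
by rewrite mul_mx_scalar -scalar_mxM addrC.
Qed.

Lemma det_blk (A : 'M[R]_(n.+1)) b c : \det (blk A b c) = \det A * c.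
Proof. by rewrite /blk det_castmx_sq det_ublock det_scalar1. Qed.



Lemma cast_widen (i : 'I_n.+1) :
  cast_ord (esym (addn1 n.+1)) (widen_ord (leqnSn n.+1) i) = lshift 1 i.
Proof. exact: val_inj. Qed.
Lemma cast_max :
  cast_ord (esym (addn1 n.+1)) ord_max = rshift n.+1 (ord0 : 'I_1).
Proof. by apply: val_inj; rewrite /= addn0. Qed.

Lemma blkE_ul A b c i j : blk A b c (widen_ord (leqnSn n.+1) i) (widen_ord (leqnSn n.+1) j) = A i j.
Proof. by rewrite /blk castmxE /= !cast_widen block_mxEul. Qed.
Lemma blkE_ur A b c i : blk A b c (widen_ord (leqnSn n.+1) i) ord_max = b i 0.
Proof. by rewrite /blk castmxE /= cast_widen cast_max block_mxEur. Qed.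
Lemma blkE_dl A b c j : blk A b c ord_max (widen_ord (leqnSn n.+1) j) = 0.
Proof. by rewrite /blk castmxE /= cast_widen cast_max block_mxEdl mxE. Qed.
Lemma blkE_dr A b c : blk A b c ord_max ord_max = c.
Proof. by rewrite /blk castmxE /= cast_max block_mxEdr mxE. Qed.

Lemma ordP2 (i : 'I_n.+2) : i = ord_max \/ exists i', i = widen_ord (leqnSn n.+1) i'.
Proof.
case: (ltnP i n.+1) => h.
  by right; exists (Ordinal h); apply: val_inj.
by left; apply: val_inj => /=; apply/eqP; rewrite eqn_leq h -ltnS ltn_ord.
Qed.

Lemma mx2P (M N : 'M[R]_(n.+2)) :
  (forall i j, M (widen_ord (leqnSn n.+1) i) (widen_ord (leqnSn n.+1) j) =
               N (widen_ord (leqnSn n.+1) i) (widen_ord (leqnSn n.+1) j)) ->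
  (forall i, M (widen_ord (leqnSn n.+1) i) ord_max = N (widen_ord (leqnSn n.+1) i) ord_max) ->
  (forall j, M ord_max (widen_ord (leqnSn n.+1) j) = N ord_max (widen_ord (leqnSn n.+1) j)) ->
  M ord_max ord_max = N ord_max ord_max -> M = N.
Proof.
move=> h1 h2 h3 h4; apply/matrixP => i j.
case: (ordP2 i) => [->|[i' ->]]; case: (ordP2 j) => [->|[j' ->]]; by [].
Qed.

Lemma blk1 : blk 1%:M 0 1 = 1%:M.
Proof.
have hw (i j : 'I_n.+1) : (widen_ord (leqnSn n.+1) i == widen_ord (leqnSn n.+1) j) = (i == j).
  by apply/eqP/eqP => [/(congr1 val) /= /val_inj|->].
have hm (i : 'I_n.+1) : (widen_ord (leqnSn n.+1) i == ord_max) = false.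
  by apply/negbTE; rewrite -val_eqE /= neq_ltn ltn_ord.
apply: mx2P => *; rewrite ?blkE_ul ?blkE_ur ?blkE_dl ?blkE_dr !mxE ?eqxx ?hw ?hm // eq_sym hm //.
Qed.

Lemma blk_inj A b c A' b' c' : blk A b c = blk A' b' c' -> [/\ A = A', b = b' & c = c'].
Proof.
move=> e; split.
- by apply/matrixP => i j; rewrite -(blkE_ul A b c) e blkE_ul.
- by apply/matrixP => i j; rewrite (ord1 j) -(blkE_ur A b c) e blkE_ur.
- by rewrite -(blkE_dr A b c) e blkE_dr.
Qed.

Definition Pshape (M : 'M[R]_(n.+2)) := forall j, M ord_max (widen_ord (leqnSn n.+1) j) = 0.

Lemma PshapeP M : Pshape M -> exists A b c, M = blk A b c.
Proof.
move=> hM; exists (\matrix_(i,j) M (widen_ord (leqnSn n.+1) i) (widen_ord (leqnSn n.+1) j)).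
exists (\col_i M (widen_ord (leqnSn n.+1) i) ord_max); exists (M ord_max ord_max).
by apply: mx2P => *; rewrite ?blkE_ul ?blkE_ur ?blkE_dl ?blkE_dr ?mxE ?hM.
Qed.

Lemma Pshape_blk A b c : Pshape (blk A b c).
Proof. by move=> j; rewrite blkE_dl. Qed.

Lemma intmx1 : intmx R (1%:M : 'M[int]_(n.+1)) = 1%:M.
Proof. by rewrite /intmx map_mx1. Qed.
Lemma intmxM (A B : 'M[int]_(n.+1)) : intmx R (A *m B) = intmx R A *m intmx R B.
Proof. exact: map_mxM. Qed.
Lemma intmxV (gam : 'M[int]_(n.+1)) : gam \in unitmx ->
  intmx R gam *m intmx R (invmx gam) = 1%:M.
Proof. by move=> u; rewrite -intmxM mulmxV // intmx1. Qed.
Lemma intmx_unit (gam : 'M[int]_(n.+1)) : gam \in unitmx -> intmx R gam \in unitmx.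
Proof. by move=> u; case: (mulmx1_unit (intmxV u)). Qed.

Lemma unitmxZ (lam : R) (A : 'M[R]_(n.+1)) : lam != 0 -> A \in unitmx -> lam *: A \in unitmx.
Proof. by move=> l; rewrite !unitmxE detZ unitrM unitrX ?unitfE. Qed.

Lemma det_unit (A : 'M[R]_(n.+1)) : A \in unitmx -> \det A != 0.
Proof. by rewrite unitmxE => u; rewrite -unitfE. Qed.

Local Notation QS := (@Qset R n).
Definition Qmat lam gam b := blk (lam *: intmx R gam) b (\det (lam *: intmx R gam))^-1.

Lemma QsetE q : QS q <-> exists lam gam b, [/\ lam != 0, gam \in unitmx & q = Qmat lam gam b].
Proof. by []. Qed.

Lemma Q1 : QS (1%:M : 'M[R]_(n.+2)).
Proof.
exists 1, 1%:M, 0; split; rewrite ?oner_eq0 ?unitmx1 //.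
by rewrite scale1r intmx1 det1 invr1 blk1.
Qed.

Lemma QM q q' : QS q -> QS q' -> QS (q *m q').
Proof.
move=> [lam [gam [b [l0 u ->]]]] [lam' [gam' [b' [l0' u' ->]]]].
exists (lam * lam'), (gam *m gam'), (lam *: intmx R gam *m b' + (\det (lam' *: intmx R gam'))^-1 *: b).
split; first by rewrite mulf_neq0.
  by rewrite unitmx_mul u u'.
rewrite /Qmat blkM; congr blk.
  by rewrite intmxM -scalemxAl -scalemxAr scalerA.
by rewrite -invfM -det_mulmx intmxM -scalemxAl -scalemxAr scalerA.
Qed.

Lemma QV q : QS q -> exists q', QS q' /\ q *m q' = 1%:M.
Proof.
move=> [lam [gam [b [l0 u ->]]]].
set A := lam *: intmx R gam.
have uA : A \in unitmx by apply: unitmxZ => //; exact: intmx_unit.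
have AA' : A *m (lam^-1 *: intmx R (invmx gam)) = 1%:M.
  by rewrite /A -scalemxAl -scalemxAr scalerA mulfV // scale1r intmxV.
have dA : \det A * \det (lam^-1 *: intmx R (invmx gam)) = 1.
  by rewrite -det_mulmx AA' det1.
exists (Qmat lam^-1 (invmx gam) (- (\det A) *: (invmx A *m b))); split.
  exists lam^-1, (invmx gam), (- (\det A) *: (invmx A *m b)); split => //.
    by rewrite invr_eq0.
  by rewrite unitmx_inv.
have dA' : \det (lam^-1 *: intmx R (invmx gam)) = (\det A)^-1.
  by apply/esym; rewrite -[(\det A)^-1]mulr1 -dA mulKf // det_unit.
rewrite /Qmat blkM -/A AA' dA' invrK mulVf ?det_unit //.
rewrite -scalemxAr mulmxA mulmxV // mul1mx scaleNr addrC subrr.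
exact: blk1.
Qed.

Lemma Qdet q : QS q -> \det q = 1.
Proof.
move=> [lam [gam [b [l0 u ->]]]]; rewrite det_blk mulfV // det_unit //.
by apply: unitmxZ => //; exact: intmx_unit.
Qed.

End Alg.

Lemma coset_pi_eq T (cls : T -> set T) a b :
  coset_pi cls a = coset_pi cls b <-> cls a = cls b.
Proof.
split => [/(congr1 (@proj1_sig _ _)) //|e].
rewrite /coset_pi; move: (ex_intro _ a _) (ex_intro _ b _); rewrite e => p1 p2.
by congr exist; exact: Prop_irrelevance.
Qed.

Section Cls.
Variables (R : realType) (n : nat).
Local Notation QS := (@Qset R n).
Local Notation SL := (SLt R n).

Lemma SLmulP (h : SL) q : QS q -> val h *m q \in @SLset R n.
Proof.
case: h => h hh /= Qq; move: hh; rewrite !inE /SLset /= => hh.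
by rewrite det_mulmx hh Qdet // mul1r.
Qed.
Definition SLmul (h : SL) q (Qq : QS q) : SL := exist _ (val h *m q) (SLmulP h Qq).

Lemma piQ_eq (h h' : SL) :
  \pi_(Xdd R n) h = \pi_(Xdd R n) h' <-> exists q, QS q /\ val h' = val h *m q.
Proof.
rewrite !unlock coset_pi_eq; split => [e|[q [Qq e]]].
  have : clsQ h' h' by exists 1%:M; split; [exact: Q1| rewrite mulmx1].
  by rewrite -e.
have [q' [Qq' qq']] := QV Qq.
apply/seteqP; split => x [q1 [Qq1 ex]].
  exists (q' *m q1); split; first exact: QM.
  by rewrite ex e mulmxA -(mulmxA (val h) q q') qq' mulmx1.
by exists (q *m q1); split; [exact: QM | rewrite ex e mulmxA].
Qed.

Lemma repr_piQ (h : SL) : exists q, QS q /\ val (repr (\pi_(Xdd R n) h)) = val h *m q.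
Proof. by apply/piQ_eq; rewrite reprK. Qed.

End Cls.

Section ClsPZ.
Variables (R : realType) (n : nat).
Local Notation QS := (@Qset R n).
Local Notation SL := (SLt R n).
Local Notation GL := (GLt R n).

Definition PZ (a : 'M[R]_(n.+1)) :=
  exists lam gam, [/\ lam != 0, gam \in unitmx & a = lam *: intmx R gam].

Lemma PZ1 : PZ 1%:M.
Proof. by exists 1, 1%:M; split; rewrite ?oner_eq0 ?unitmx1 // scale1r intmx1. Qed.

Lemma PZM a a' : PZ a -> PZ a' -> PZ (a *m a').
Proof.
move=> [lam [gam [l0 u ->]]] [lam' [gam' [l0' u' ->]]].
exists (lam * lam'), (gam *m gam'); split; first by rewrite mulf_neq0.
  by rewrite unitmx_mul u u'.
by rewrite intmxM -scalemxAl -scalemxAr scalerA.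
Qed.

Lemma PZV a : PZ a -> exists a', PZ a' /\ a *m a' = 1%:M.
Proof.
move=> [lam [gam [l0 u ->]]].
exists (lam^-1 *: intmx R (invmx gam)); split.
  by exists lam^-1, (invmx gam); split; rewrite ?invr_eq0 ?unitmx_inv.
by rewrite -scalemxAl -scalemxAr scalerA mulfV // scale1r intmxV.
Qed.

Lemma PZ_unit a : PZ a -> a \in unitmx.
Proof. by move=> [lam [gam [l0 u ->]]]; apply: unitmxZ => //; exact: intmx_unit. Qed.

Lemma PZ_Q a : PZ a -> QS (blk a 0 (\det a)^-1).
Proof. by move=> [lam [gam [l0 u ->]]]; exists lam, gam, 0. Qed.

Lemma clsPZE (m m' : GL) : clsPZ m m' <-> exists a, PZ a /\ val m' = val m *m a.
Proof.
split => [[lam [gam [l0 u e]]]|[a [[lam [gam [l0 u ->]]] e]]].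
  by exists (lam *: intmx R gam); split; [exists lam, gam|rewrite e scalemxAr].
by exists lam, gam; split => //; rewrite e scalemxAr.
Qed.

Lemma piPZ_eq (m m' : GL) :
  \pi_(Xd1 R n) m = \pi_(Xd1 R n) m' <-> exists a, PZ a /\ val m' = val m *m a.
Proof.
rewrite !unlock coset_pi_eq; split => [e|[q [Qq e]]].
  have : clsPZ m' m' by apply/clsPZE; exists 1%:M; split; [exact: PZ1| rewrite mulmx1].
  by rewrite -e => /clsPZE.
have [q' [Qq' qq']] := PZV Qq.
apply/seteqP; split => x /clsPZE [q1 [Qq1 ex]]; apply/clsPZE.
  exists (q' *m q1); split; first exact: PZM.
  by rewrite ex e mulmxA -(mulmxA (val m) q q') qq' mulmx1.
by exists (q *m q1); split; [exact: PZM | rewrite ex e mulmxA].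
Qed.

Lemma repr_piPZ (m : GL) : exists a, PZ a /\ val (repr (\pi_(Xd1 R n) m)) = val m *m a.
Proof. by apply/piPZ_eq; rewrite reprK. Qed.

Lemma blk_diagM (m a : 'M[R]_(n.+1)) :
  blk (m *m a) 0 (\det (m *m a))^-1 = blk m 0 (\det m)^-1 *m blk a 0 (\det a)^-1.
Proof. by rewrite blkM mulmx0 scaler0 addr0 det_mulmx invfM. Qed.

Lemma emb_PZ (g : SL) (m m' : GL) a : PZ a -> val m' = val m *m a ->
  \pi_(Xdd R n) (emb g m') = \pi_(Xdd R n) (emb g m).
Proof.
move=> Pa e; apply/esym/piQ_eq; exists (blk a 0 (\det a)^-1); split; first exact: PZ_Q.
by rewrite /= /embmx e blk_diagM mulmxA.
Qed.

Lemma phi_pi (g : SL) (m : GL) : phi g (\pi_(Xd1 R n) m) = \pi_(Xdd R n) (emb g m).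
Proof.
rewrite /phi; have [a [Pa e]] := repr_piPZ m; exact: emb_PZ e.
Qed.

End ClsPZ.

Section Plane.
Variables (R : realType) (n : nat).
Local Notation QS := (@Qset R n).
Local Notation SL := (SLt R n).
Local Notation GL := (GLt R n).
Local Notation wd := (widen_ord (leqnSn n.+1)).

Definition vec (c : 'I_n.+1 -> R) : 'cV[R]_(n.+2) := \sum_(i < n.+1) c i *: delta_mx (wd i) 0.

Lemma vec_last c : vec c ord_max 0 = 0.
Proof.
rewrite /vec summxE big1 // => i _; rewrite !mxE.
have -> : (ord_max == wd i) = false.
  by apply/negbTE; rewrite -val_eqE /= eq_sym neq_ltn ltn_ord.
by rewrite mulr0.
Qed.

Lemma vec_sum (M : 'M[R]_(n.+2)) c :
  \sum_(i < n.+1) c i *: col (wd i) M = M *m vec c.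
Proof.
rewrite /vec mulmx_sumr; apply: eq_bigr => i _; by rewrite colE scalemxAr.
Qed.

Lemma vecP (w : 'cV[R]_(n.+2)) : w ord_max 0 = 0 -> w = vec (fun i => w (wd i) 0).
Proof.
move=> h; rewrite {1}[w]matrix_sum_delta big_ord_recr /= big_ord1 h scale0r addr0.
by apply: eq_bigr => i _; rewrite big_ord1.
Qed.

Lemma planeE (g : 'M[R]_(n.+2)) v :
  plane g v <-> exists w : 'cV[R]_(n.+2), w ord_max 0 = 0 /\ v = g *m w.
Proof.
split => [[c ->]|[w [h ->]]].
  by exists (vec c); rewrite vec_last vec_sum.
by exists (fun i => w (wd i) 0); rewrite vec_sum -vecP.
Qed.

Lemma latE (h : 'M[R]_(n.+2)) v :
  lat h v <-> exists c : 'I_n.+1 -> int, v = h *m vec (fun i => (c i)%:~R).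
Proof. by split => [[c ->]|[c ->]]; exists c; rewrite vec_sum. Qed.

Lemma lat_sub (g M : 'M[R]_(n.+2)) : Pshape M -> lat (g *m M) `<=` plane g.
Proof.
move=> PM v /latE [c ->]; apply/planeE.
exists (M *m vec (fun i => (c i)%:~R)); split; last by rewrite mulmxA.
rewrite mxE big_ord_recr /= vec_last mulr0 addr0 big1 // => i _.
by rewrite PM mul0r.
Qed.

Lemma col_in_lat (h : 'M[R]_(n.+2)) j : lat h (col (wd j) h).
Proof.
exists (fun i => (i == j)%:Z); rewrite (bigD1 j) //= eqxx scale1r big1 ?addr0 //.
by move=> i /negbTE ->; rewrite scale0r.
Qed.

Lemma plane_Pshape (g h : 'M[R]_(n.+2)) : g \in unitmx ->
  lat h `<=` plane g -> Pshape (invmx g *m h).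
Proof.
move=> ug sub j.
have /sub /planeE [w [w0 ew]] := col_in_lat h j.
have -> : (invmx g *m h) ord_max (wd j) = (invmx g *m col (wd j) h) ord_max 0.
  by rewrite [in RHS]colE mulmxA -colE [in RHS]mxE.
rewrite ew mulKmx //.
Qed.
End Plane.

Section Part1.
Variables (R : realType) (n : nat).
Local Notation QS := (@Qset R n).
Local Notation SL := (SLt R n).
Local Notation GL := (GLt R n).
Local Notation wd := (widen_ord (leqnSn n.+1)).

Lemma SLdet (h : SL) : \det (val h) = 1.
Proof. by case: h => h /=; rewrite inE. Qed.
Lemma SLunit (h : SL) : val h \in unitmx.
Proof. by rewrite unitmxE SLdet unitr1. Qed.
Lemma GLunit (m : GL) : val m \in unitmx.
Proof. by case: m => m /=; rewrite inE. Qed.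

Lemma Pshape_Pset (M : 'M[R]_(n.+2)) : Pshape M -> \det M = 1 -> Pset M.
Proof.
move=> /PshapeP [A [b [c ->]]]; rewrite det_blk => d1.
have dA : \det A != 0 by apply/eqP => h; move: d1; rewrite h mul0r => /eqP; rewrite eq_sym oner_eq0.
exists A, b; split; first by rewrite unitmxE unitfE.
by congr blk; apply: (mulfI dA); rewrite d1 mulfV.
Qed.

Lemma Pset_shape (p : 'M[R]_(n.+2)) : Pset p -> Pshape p.
Proof. by move=> [m [b [_ ->]]]; exact: Pshape_blk. Qed.

Lemma Pshape_mulQ (M q : 'M[R]_(n.+2)) : Pshape M -> QS q -> Pshape (M *m q).
Proof.
move=> /PshapeP [A [b [c ->]]] [lam [gam [b' [_ _ ->]]]].
by rewrite /Qmat blkM; exact: Pshape_blk.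
Qed.

Lemma Pshape_mul (M N : 'M[R]_(n.+2)) : Pshape M -> Pshape N -> Pshape (M *m N).
Proof.
move=> /PshapeP [A [b [c ->]]] /PshapeP [A' [b' [c' ->]]].
by rewrite blkM; exact: Pshape_blk.
Qed.

Lemma XP_shape (g : SL) x (h : SL) : XP (plane (val g)) x -> \pi_(Xdd R n) h = x ->
  Pshape (invmx (val g) *m val h).
Proof.
move=> Xx hx.
have P0 := plane_Pshape (SLunit g) Xx.
have [q [Qq e]] : exists q, QS q /\ val h = val (repr x) *m q.
  by apply/piQ_eq; rewrite reprK hx.
by rewrite e mulmxA; exact: Pshape_mulQ.
Qed.

Lemma part1 (g : SL) : XP (plane (val g)) = gPQ g.
Proof.
apply/seteqP; split => x.
  move=> Xx; have P0 := plane_Pshape (SLunit g) Xx.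
  exists (repr x); last by rewrite reprK.
  exists (invmx (val g) *m val (repr x)); split; last by rewrite mulKVmx // SLunit.
  apply: Pshape_Pset => //.
  by rewrite det_mulmx det_inv !SLdet invr1 mul1r.
case=> h [p [Pp e]] <-; rewrite /XP.
have [q [Qq hq]] := repr_piQ h.
change (lat (val (repr (\pi_(Xdd R n) h))) `<=` plane (val g)); rewrite hq.
rewrite e -mulmxA; apply: lat_sub; apply: Pshape_mulQ => //; exact: Pset_shape.
Qed.

End Part1.

Section Cont2.
Variables (R : realType) (n : nat).
Local Notation SL := (SLt R n).
Local Notation GL := (GLt R n).
Local Notation wd := (widen_ord (leqnSn n.+1)).

Lemma val_contGL : continuous (fun m : GL => val m).
Proof. exact: initial_continuous. Qed.
Lemma val_contSL : continuous (fun m : SL => val m).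
Proof. exact: initial_continuous. Qed.

Lemma entry_blk (T : topologicalType) (f : T -> 'M[R]_(n.+1)) (b : T -> 'cV[R]_(n.+1))
   (c : T -> R) x :
  (forall i j, {for x, continuous (fun y => f y i j)}) ->
  (forall i j, {for x, continuous (fun y => b y i j)}) ->
  {for x, continuous c} ->
  forall i j, {for x, continuous (fun y => blk (f y) (b y) (c y) i j)}.
Proof.
move=> hf hb hc i j.
case: (ordP2 i) => [->|[i' ->]]; case: (ordP2 j) => [->|[j' ->]].
- by apply: (cont_ext (f := c)) => [y|//]; rewrite blkE_dr.
- by apply: (cont_ext (f := fun=> (0 : R))) => [y|]; [rewrite blkE_dl|exact: cst_continuous].
- by apply: (cont_ext (f := fun y => b y i' 0)) => [y|//]; rewrite blkE_ur.
- by apply: (cont_ext (f := fun y => f y i' j')) => [y|//]; rewrite blkE_ul.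
Qed.

Lemma SLcont (T : topologicalType) (f : T -> SL) :
  continuous (fun y => val (f y)) -> continuous f.
Proof. move=> h; exact: (@continuous_comp_initial _ _ _ set_val f h). Qed.

Lemma emb_cont (g : SL) : continuous (emb g).
Proof.
apply: SLcont => m /=; rewrite /embmx.
apply: mx_cont; apply: entry_mull; apply: entry_blk.
- by move=> i j; apply: (@continuous_comp _ _ _ (fun m : GL => val m) (fun M => M i j)); [exact: val_contGL| exact: coord_continuous].
- by move=> i j; rewrite mxE; exact: cst_continuous.
- apply: continuousV; first by apply: det_unit; exact: GLunit.
  apply: entry_det => i j.
  by apply: (@continuous_comp _ _ _ (fun m : GL => val m) (fun M => M i j)); [exact: val_contGL| exact: coord_continuous].
Qed.

End Cont2.

Section Part2.
Variables (R : realType) (n : nat).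
Local Notation QS := (@Qset R n).
Local Notation SL := (SLt R n).
Local Notation GL := (GLt R n).
Local Notation wd := (widen_ord (leqnSn n.+1)).

Lemma phi_cont (g : SL) : continuous (phi g).
Proof.
apply/quotient_continuous.
have -> : phi g \o \pi_(Xd1 R n) = \pi_(Xdd R n) \o emb g.
  by apply: funext => m /=; rewrite phi_pi.
move=> x; apply: continuous_comp; first exact: emb_cont.
exact: pi_continuous.
Qed.

Lemma pi_gP (g h : SL) (m : GL) b :
  val h = val g *m blk (val m) b (\det (val m))^-1 ->
  \pi_(Xdd R n) h = \pi_(Xdd R n) (emb g m).
Proof.
move=> e; apply/esym/piQ_eq; exists (blk 1%:M (invmx (val m) *m b) 1); split.
  exists 1, 1%:M, (invmx (val m) *m b); split; rewrite ?oner_eq0 ?unitmx1 //.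
  by rewrite /Qmat scale1r intmx1 det1 invr1.
rewrite e /= /embmx -mulmxA blkM mulmx1 mulr1 scaler0 addr0 mulKVmx //.
exact: GLunit.
Qed.

Lemma GLmkP (m : 'M[R]_(n.+1)) : m \in unitmx -> m \in @GLset R n.
Proof. by rewrite inE. Qed.

Lemma image_phi (g : SL) : phi g @` setT = XP (plane (val g)).
Proof.
rewrite part1; apply/seteqP; split => x.
  case=> y _ <-; rewrite /phi.
  exists (emb g (repr y)) => //.
  exists (blk (val (repr y)) 0 (\det (val (repr y)))^-1); split => //.
  by exists (val (repr y)), 0; split => //; exact: GLunit.
case=> h [p [[m [b [um ep]]] e]] <-.
exists (\pi_(Xd1 R n) (exist _ m (GLmkP um))) => //.
rewrite phi_pi; apply/esym; apply: pi_gP.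
by rewrite e ep.
Qed.

Lemma phi_shift (g g' : SL) p0 : Pset p0 -> val g' = val g *m p0 ->
  exists m0 : GL, forall x, phi g' x = phi g (actGL m0 x).
Proof.
move=> [m0 [b0 [u0 ep]]] e.
exists (exist _ m0 (GLmkP u0)) => x.
rewrite /actGL phi_pi /phi; apply: pi_gP.
rewrite /= /embmx e ep -mulmxA blkM mulmx0 add0r det_mulmx invfM.
by [].
Qed.

End Part2.

Section Part3.
Variables (R : realType) (n : nat).
Local Notation SL := (SLt R n).
Local Notation GL := (GLt R n).

Lemma phi_meas (g : SL) (B : set (BXdd R n)) : measurable B ->
  measurable (phi g @^-1` B : set (BXd1 R n)).
Proof.
move=> mB.
have mf : measurable_fun setT (phi g : BXd1 R n -> BXdd R n).
  apply: (@measurability _ _ (BXd1 R n) (BXdd R n) setT (phi g) (@open (Xdd R n))); first by [].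
  move=> _ [A oA <-]; apply: sub_sigma_algebra; rewrite setTI.
  exact: (proj1 (@continuousP (Xd1 R n) (Xdd R n) (phi g)) (@phi_cont R n g) A oA).
by have := mf measurableT B mB; rewrite setTI.
Qed.

Lemma Pset1 : Pset (1%:M : 'M[R]_(n.+2)).
Proof. by exists 1%:M, 0; split; rewrite ?unitmx1 // det1 invr1 blk1. Qed.

Lemma part3 (g g' : SL) : gP g = gP g' ->
   forall mu : probability (BXd1 R n) R, PGL_invariant mu ->
   forall B : set (BXdd R n), measurable B ->
     mu (phi g @^-1` B) = mu (phi g' @^-1` B).
Proof.
move=> e mu inv B mB.
have : gP g' (val g') by exists 1%:M; [exact: Pset1|rewrite mulmx1].
rewrite -e => -[p0 Pp0 ep].
have [m0 hm0] := phi_shift Pp0 (esym ep).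
have -> : phi g' @^-1` B = actGL m0 @^-1` (phi g @^-1` B).
  by apply/seteqP; split => x /=; rewrite hm0.
by rewrite inv //; exact: phi_meas.
Qed.
End Part3.

Section Psi.
Variables (R : realType) (n : nat).
Local Notation QS := (@Qset R n).
Local Notation SL := (SLt R n).
Local Notation GL := (GLt R n).
Local Notation wd := (widen_ord (leqnSn n.+1)).

Definition F2 (g : SL) (M : 'M[R]_(n.+2)) : 'M[R]_(n.+1) :=
  \matrix_(i, j) (invmx (val g) *m M) (wd i) (wd j).

Definition psi (g : SL) (x : Xdd R n) : Xd1 R n :=
  \pi_(Xd1 R n) (insubd (GL1 R n) (F2 g (val (repr x)))).

Lemma F2_blk g M A b c : invmx (val g) *m M = blk A b c -> F2 g M = A.
Proof. by move=> e; apply/matrixP => i j; rewrite mxE e blkE_ul. Qed.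

Lemma F2_shape g (M : 'M[R]_(n.+2)) : \det M = 1 -> Pshape (invmx (val g) *m M) ->
  exists b c, invmx (val g) *m M = blk (F2 g M) b c /\ F2 g M \in unitmx.
Proof.
move=> dM /PshapeP [A [b [c e]]]; exists b, c; rewrite (F2_blk e); split => //.
have : \det (invmx (val g) *m M) = 1 by rewrite det_mulmx det_inv SLdet invr1 dM mul1r.
rewrite e det_blk unitmxE unitfE => d1; apply/eqP => h; move: d1.
by rewrite h mul0r => /eqP; rewrite eq_sym oner_eq0.
Qed.

Lemma F2_mulQ g (M : 'M[R]_(n.+2)) lam gam b' : Pshape (invmx (val g) *m M) ->
  F2 g (M *m Qmat lam gam b') = F2 g M *m (lam *: intmx R gam).
Proof.
move=> /PshapeP [A [b [c e]]]; rewrite (F2_blk e).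
by apply: (F2_blk (b := A *m b' + _ *: b) (c := c * _)); rewrite mulmxA e /Qmat blkM.
Qed.

Lemma psi_phi g x : psi g (phi g x) = x.
Proof.
rewrite /psi /phi.
have [q [[lam [gam [b [l0 u eq]]]] e]] := repr_piQ (emb g (repr x)).
rewrite e eq.
have Pe : Pshape (invmx (val g) *m val (emb g (repr x))).
  by rewrite /= /embmx mulKmx ?SLunit //; exact: Pshape_blk.
rewrite F2_mulQ //.
have -> : F2 g (val (emb g (repr x))) = val (repr x).
  by apply: (F2_blk (b := 0) (c := (\det (val (repr x)))^-1)); rewrite /= /embmx mulKmx ?SLunit.
rewrite -{2}[x]reprK; apply/esym/piPZ_eq; exists (lam *: intmx R gam); split.
  by exists lam, gam.
rewrite insubdK //; apply: GLmkP; rewrite unitmx_mul GLunit /=; apply: unitmxZ => //.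
exact: intmx_unit.
Qed.


Lemma F2_cont g q : continuous (fun M : 'M[R]_(n.+2) => F2 g (M *m q)).
Proof.
move=> M; apply: mx_cont => i j.
apply: (cont_ext (f := fun N : 'M[R]_(n.+2) => (invmx (val g) *m (N *m q)) (wd i) (wd j))) => [N|].
  by rewrite mxE.
apply: entry_mull; apply: entry_mulr => k l; exact: coord_continuous.
Qed.

Lemma openGL (U : set (Xd1 R n)) : open U ->
  exists2 W0 : set 'M[R]_(n.+1), open W0 &
    (fun m : GL => val m) @^-1` W0 = \pi_(Xd1 R n) @^-1` U.
Proof.
move=> oU; case: oU => W0 oW0 e. by exists W0.
Qed.


Lemma openXdd (V : set (Xdd R n)) :
  (exists2 O0 : set 'M[R]_(n.+2), open O0 &
    (fun h : SL => val h) @^-1` O0 = \pi_(Xdd R n) @^-1` V) -> open V.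
Proof. by case=> O0 oO0 e; exists O0. Qed.

Lemma psi_cont g : {within XP (plane (val g)), continuous (psi g)}.
Proof.
apply/continuousP => U oU; apply/open_subspaceP.
have [W0 oW0 eW] := openGL oU.
pose V := [set y : Xdd R n | exists o : SL, W0 (F2 g (val o)) /\ \pi_(Xdd R n) o = y].
exists V.
  apply: openXdd.
  exists (\bigcup_(q in QS) ((fun M => F2 g (M *m q)) @^-1` W0)).
    apply: bigcup_open => q _.
    exact: (proj1 (continuousP _) (@F2_cont g q) W0 oW0).
  apply/seteqP; split => h /=.
    case=> q Qq hq.
    exists (SLmul h Qq); split => //.
    by apply/esym/piQ_eq; exists q.
  case=> o [Wo /esym/piQ_eq [q [Qq e]]].
  by exists q => //=; rewrite -e.
apply/seteqP; split => y [Vy Xy]; split => //.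
  case: Vy => o [Wo oy].
  have Ps := XP_shape Xy oy.
  have [b [c [eb uF]]] := F2_shape (SLdet o) Ps.
  have [q [[lam [gam [b' [l0 u eq]]]] e]] := repr_piQ o.
  rewrite -oy; change (U (psi g (\pi_(Xdd R n) o))); rewrite /psi e eq F2_mulQ //.
  have -> : \pi_(Xd1 R n) (insubd (GL1 R n) (F2 g (val o) *m (lam *: intmx R gam))) =
            \pi_(Xd1 R n) (exist _ (F2 g (val o)) (GLmkP uF)).
    apply/esym/piPZ_eq; exists (lam *: intmx R gam); split; first by exists lam, gam.
    rewrite insubdK //; apply: GLmkP; rewrite unitmx_mul uF /=; apply: unitmxZ => //.
    exact: intmx_unit.
  have H : ((fun m : GL => val m) @^-1` W0) (exist _ (F2 g (val o)) (GLmkP uF)) by [].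
  by move: H; rewrite eW.
exists (repr y); split; last by rewrite reprK.
have Ps := XP_shape Xy (reprK y).
have [b [c [eb uF]]] := F2_shape (SLdet (repr y)) Ps.
have : (\pi_(Xd1 R n) @^-1` U) (insubd (GL1 R n) (F2 g (val (repr y)))) by exact: Vy.
by rewrite -eW /= insubdK //; exact: GLmkP.
Qed.

End Psi.

Unset Implicit Arguments.
Set Strict Implicit.

Theorem lemma2p1 (R : realType) (n : nat) (g : SLt R n) :
  (* (1) *)
  XP (plane (val g)) = gPQ g /\
  (* (2) phi_g is a homeomorphism from X_{d-1} onto X_P (subspace topology) *)
  (continuous (phi g) /\ phi g @` setT = XP (plane (val g)) /\
   exists psi : Xdd R n -> Xd1 R n,
     (forall x, psi (phi g x) = x) /\ {within XP (plane (val g)), continuous psi}) /\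
  (* (3) *)
  (forall g' : SLt R n, gP g = gP g' ->
   forall mu : probability (BXd1 R n) R, PGL_invariant mu ->
   forall B : set (BXdd R n), measurable B ->
     mu (phi g @^-1` B) = mu (phi g' @^-1` B)).
Proof.
split; first exact: part1.
split.
  split; first exact: (@phi_cont R n g).
  split; first exact: image_phi.
  exists (psi g); split; [exact: psi_phi | exact: psi_cont].
exact: part3.
Qed.
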